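(* Let $k$ and $N$ be positive integers and let $\varepsilon=\varepsilon(k,N)\in(0,1/2]$. Set $\kappa=\lfloor 1/\varepsilon\rfloor+1$ and $$V(k)=\max\Big\{\frac{\kappa^{2k-2}}{2}\Big(\varepsilon-\frac1\kappa\Big)^{-1},\ \kappa^{k-1}+\varepsilon\Big\}.$$ If $n_1,\ldots,n_k$ are nonnegative integers with $n_1<n_2<\cdots<n_k\le N$ and $n_k\ge V(k)$, then there exists an integer $$d\in\Big(\frac{n_k}{\kappa^{k-1}+\varepsilon},\ \frac{n_k}{1-\varepsilon}\Big)$$ such that $n_j \bmod d \in[0,\varepsilon d)\cup((1-\varepsilon)d,d)$ for every $j\in\{1,\ldots,k\}$.
   Context: For an integer $n$ and positive integer $d$, $n\bmod d$ denotes the unique $a\in\{0,1,\ldots,d-1\}$ with $n\equiv a\pmod d$. *)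

(* Defs.v *)
From HB Require Import structures.
From mathcomp Require Import all_boot all_order all_algebra.
From mathcomp Require Import reals.
Set Implicit Arguments. Unset Strict Implicit. Unset Printing Implicit Defensive.
Import Order.TTheory GRing.Theory Num.Theory.
Local Open Scope ring_scope.

Definition kappa {R : realType} (eps : R) : int := Num.floor (eps^-1) + 1.

Definition Vk {R : realType} (eps : R) (k : nat) : R :=
  let kap : R := (kappa eps)%:~R in
  Num.max (kap ^+ (2 * k - 2)%N / 2 * (eps - kap^-1)^-1)
          (kap ^+ (k - 1)%N + eps).

(* Main.v *)
Require Import Defs.
From HB Require Import structures.
From mathcomp Require Import all_boot all_order all_algebra.
From mathcomp Require Import reals.
From mathcomp Require Import zify ring lra.
Import Order.TTheory GRing.Theory Num.Theory.
Local Open Scope ring_scope.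

Section NatPart.
Local Open Scope nat_scope.
Lemma box_lt (K nk a : nat) : (0 < K)%N -> (0 < nk)%N -> (K * (a %% nk)) %/ nk < K.
Proof.
move=> K0 n0; rewrite ltn_divLR // ltn_pmul2l //; exact: ltn_pmod.
Qed.

Lemma close_pair (K nk x1 x2 : nat) : (0 < K)%N -> (0 < nk)%N -> (x1 <= x2)%N ->
  (K * (x1 %% nk)) %/ nk = (K * (x2 %% nk)) %/ nk ->
  let q := (x2 %/ nk - x1 %/ nk)%N in
  K * (x2 - x1) < K * (q * nk) + nk /\ K * (q * nk) < K * (x2 - x1) + nk.
Proof.
move=> K0 n0 le12 Ht q.
have e1 := divn_eq x1 nk; have e2 := divn_eq x2 nk.
have l1 := leq_div2r nk le12.
set a := x1 %% nk in e1 Ht *; set b := x2 %% nk in e2 Ht *.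
set t := (K * b) %/ nk in Ht.
have h1 := leq_trunc_div (K * a) nk; have h2 := ltn_ceil (K * a) n0.
have h3 := leq_trunc_div (K * b) nk; have h4 := ltn_ceil (K * b) n0.
rewrite Ht in h1 h2.
rewrite /q mulnBl.
set Q1 := x1 %/ nk * nk in e1 *. set Q2 := x2 %/ nk * nk in e2 *.
have : Q1 <= Q2 by rewrite leq_mul2r l1 orbT.
move: h1 h2 h3 h4; rewrite -/t. move=> h1 h2 h3 h4 hQ.
rewrite e1 e2.
have -> : Q2 + b - (Q1 + a) = (Q2 - Q1) + b - a by lia.
nia.
Qed.

Lemma pigeon (k K : nat) (n : nat -> nat) : (0 < K)%N -> (0 < n k)%N ->
  (forall j, (1 <= j <= k)%N -> n j <= n k) ->
  exists m, (0 < m <= K ^ (k - 1))%N /\ forall j, (1 <= j <= k)%N -> exists q,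
    (q <= m)%N /\ K * (n j * m) < K * (q * n k) + n k /\ K * (q * n k) < K * (n j * m) + n k.
Proof.
move=> K0 n0 hle.
set M := (K ^ (k - 1))%N.
pose f (m : 'I_M.+1) : {ffun 'I_(k-1) -> 'I_K} :=
  [ffun i : 'I_(k-1) => Ordinal (@box_lt K (n k) (n i.+1 * m) K0 n0)].
have [m1 [m2 [ne e]]] : exists m1 m2, m1 != m2 /\ f m1 = f m2.
  case: (boolP [exists m1, exists m2, (m1 != m2) && (f m1 == f m2)]).
    move/existsP=> [m1 /existsP [m2 /andP [h1 /eqP h2]]]; by exists m1, m2.
  move=> H; exfalso.
  have inj : injective f.
    move=> x y exy; apply/eqP; apply: contraNT H => nxy.
    apply/existsP; exists x; apply/existsP; exists y; by rewrite nxy exy eqxx.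
  have := @leq_card _ _ f inj; rewrite card_ffun !card_ord /M; lia.
have main : forall m1 m2 : 'I_M.+1, (m1 < m2)%N -> f m1 = f m2 ->
  exists m, (0 < m <= M)%N /\ forall j, (1 <= j <= k)%N -> exists q,
    (q <= m)%N /\ K * (n j * m) < K * (q * n k) + n k /\ K * (q * n k) < K * (n j * m) + n k.
  move=> a b ab eab; exists (b - a)%N; split.
    have := ltn_ord b; lia.
  move=> j /andP [j1 jk].
  case: (eqVneq j k) => [->|njk].
    exists (b - a)%N; split => //; rewrite (mulnC (n k)); lia.
  have jlt : (j.-1 < k - 1)%N by lia.
  have := congr1 (fun g : {ffun 'I_(k-1) -> 'I_K} => nat_of_ord (g (Ordinal jlt))) eab.
  rewrite /f !ffunE /=.
  have -> : j.-1.+1 = j by lia.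
  move=> hb.
  have ab' : (n j * a <= n j * b)%N by rewrite leq_mul2l ltnW ?orbT.
  have [c1 c2] := @close_pair K (n k) _ _ K0 n0 ab' hb.
  set q := (n j * b %/ n k - n j * a %/ n k)%N in c1 c2.
  exists q; rewrite -mulnBr in c1 c2; split => //.
  have := hle j; rewrite j1 jk => /(_ isT) hj.
  rewrite leqNgt; apply/negP => hq.
  have t1 : (K * ((b - a).+1 * n k) <= K * (q * n k))%N by rewrite leq_mul2l leq_mul2r hq !orbT.
  have t2 : (n j * (b - a) <= n k * (b - a))%N by rewrite leq_mul2r hj orbT.
  have t3 : (K * (n j * (b - a)) <= K * (n k * (b - a)))%N by rewrite leq_mul2l t2 orbT.
  have t4 : (n k <= K * n k)%N by exact: leq_pmull.
  move: c2 t1 t3 t4; rewrite mulSn (mulnC (n k) (b - a)) mulnDr.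
  set X := (K * ((b - a) * n k))%N; set Y := (K * (q * n k))%N; set Z := (K * n k)%N.
  set W := (K * (n j * (b - a)))%N. lia.
case: (ltngtP m1 m2) => h.
- exact: main h e.
- exact: main h (esym e).
- by move: ne; rewrite (val_inj h) eqxx.
Qed.

End NatPart.

Lemma core_real (R : realType) (K t nk m M q x D eps : R) :
  0 < eps -> eps <= 2^-1 -> t = eps * K -> 1 < t -> t <= 1 + eps -> 0 < K ->
  1 <= m -> m <= M -> 0 <= q -> q <= m -> (q = m \/ q <= m - 1) -> x <= nk -> 0 <= x ->
  K * (x * m - q * nk) < nk -> - nk < K * (x * m - q * nk) ->
  K * M ^+ 2 / 2 <= (t - 1) * nk ->
  nk - m / 2 < D -> D <= nk + m / 2 ->
  - (t * D) < K * (x * m - q * D) /\ K * (x * m - q * D) < t * D.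
Proof.
move=> e0 e2 te t1 t2 K0 m1 mM q0 qm qc xn x0 hr1 hr2 hM hD1 hD2.
have K2 : 2 < K by nra.
have Mm : m * m <= M * M by nra.
have mMM : m <= M * M by nra.
set r := x * m - q * nk in hr1 hr2.
have -> : x * m - q * D = r - q * (D - nk) by rewrite /r; ring.
set E := D - nk.
have nk0 : 0 <= nk by lra.
have tn : (t - 1) * nk <= nk / 2 by nra.
have nkpos : K * M ^+ 2 <= nk.
  move: hM tn; set Y := K * M ^+ 2; set Z := (t - 1) * nk; lra.
have tD : t * D = t * nk + t * E by rewrite /E; ring.
have tnk : nk <= t * nk by nra.
have KM0 : 0 <= K * M ^+ 2 by rewrite mulr_ge0 ?exprn_ge0 // ltW //; lra.
case: (lerP 0 E) => hE.
- have Kq : 0 <= K * q by rewrite mulr_ge0 // ltW.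
  have a1 : 0 <= K * q * E by rewrite mulr_ge0.
  have a2 : 0 <= t * E by rewrite mulr_ge0 //; lra.
  have a3 : K * q * E <= K * m * E.
    by rewrite ler_wpM2r // ler_wpM2l // ltW.
  have a4 : K * m * E <= K * m * (m / 2).
    have Km : 0 <= K * m by rewrite mulr_ge0 ?ltW //; lra.
    rewrite ler_wpM2l //; rewrite /E; lra.
  have a5 : K * m * (m / 2) <= K * M ^+ 2 / 2.
    have : K * (m * m) <= K * (M * M) by rewrite ler_wpM2l // ltW.
    rewrite expr2; move=> h; rewrite -mulrA mulrA -[in X in _ <= X]mulrA; lra.
  have eK : K * (r - q * E) = K * r - K * q * E by ring.
  rewrite eK tD; split; lra.
- set F := - E.
  have DF : D = nk - F by rewrite /F /E; ring.
  have hF : 0 < F by rewrite /F; lra.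
  have hF2 : F < m / 2 by rewrite /F /E; lra.
  have eK : K * (r - q * E) = K * r + K * q * F by rewrite /F; ring.
  rewrite eK DF mulrBr.
  have Kq : 0 <= K * q by rewrite mulr_ge0 // ltW.
  have a1 : 0 <= K * q * F by rewrite mulr_ge0 // ltW.
  have a2 : t * F <= 3 / 4 * m.
    have : t * F <= t * (m / 2) by rewrite ler_wpM2l ?ltW //; lra.
    have : t * (m / 2) <= (1 + eps) * (m / 2) by rewrite ler_wpM2r //; lra.
    have : eps * (m / 2) <= 2^-1 * (m / 2) by rewrite ler_wpM2r //; lra.
    have e3 : (1 + eps) * (m / 2) = m / 2 + eps * (m / 2) by ring.
    lra.
  have mM2 : m <= M ^+ 2 by rewrite expr2.
  have KMM : 2 * M ^+ 2 <= K * M ^+ 2.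
    have hM2 : 0 <= M ^+ 2 by exact: sqr_ge0.
    have : 0 <= (K - 2) * M ^+ 2 by rewrite mulr_ge0 //; lra.
    rewrite mulrBl; lra.
  have a3 : t * F <= (t - 1) * nk by lra.
  split; first by lra.
  case: qc => hq.
  + have hr0 : r <= 0.
      rewrite /r hq; have : x * m <= nk * m by rewrite ler_wpM2r //; lra.
      rewrite [m * nk]mulrC; lra.
    have b1 : K * q * F <= K * m * (m / 2).
      rewrite hq; apply: ler_wpM2l; [rewrite mulr_ge0 //; lra | lra].
    have a5 : K * m * (m / 2) <= K * M ^+ 2 / 2.
      have : K * (m * m) <= K * (M * M) by rewrite ler_wpM2l // ltW.
      rewrite expr2; move=> h; rewrite -mulrA mulrA -[in X in _ <= X]mulrA; lra.
    have tF : t * F <= m by lra.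
    have Kr : K * r <= 0 by rewrite mulr_ge0_le0 // ltW.
    lra.
  + have b1 : K * q * F <= K * (m - 1) * F.
      apply: ler_wpM2r; [lra | apply: ler_wpM2l; lra].
    have b2 : t * F <= K * F / 2.
      have KF : 0 <= K * F by rewrite mulr_ge0 // ltW.
      have : eps * (K * F) <= 2^-1 * (K * F) by apply: ler_wpM2r.
      rewrite te; lra.
    have b3 : K * (m - 1) * F + K * F / 2 <= K * m * m / 2.
      have : K * ((m - 1/2) * F) <= K * ((m - 1/2) * (m / 2)).
        apply: ler_wpM2l; [lra | apply: ler_wpM2l; lra].
      move=> h.
      have e1 : K * (m - 1) * F + K * F / 2 = K * ((m - 1/2) * F) by field.
      have e5 : K * ((m - 1/2) * (m / 2)) = K * m * m / 2 - K * m / 4 by field.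
      have : 0 <= K * m by rewrite mulr_ge0 // ltW //; lra.
      lra.
    have a5 : K * m * m / 2 <= K * M ^+ 2 / 2.
      have : K * (m * m) <= K * (M * M) by rewrite ler_wpM2l // ltW.
      rewrite expr2; move=> h; rewrite -mulrA; lra.
    have tnk2 : t * nk = (t - 1) * nk + nk by ring.
    lra.
Qed.

Lemma mod_close (R : realType) (eps : R) (x q d : nat) : (0 < d)%N -> 0 < eps -> eps <= 2^-1 ->
  (q * d)%:R - eps * d%:R < x%:R -> x%:R < (q * d)%:R + eps * d%:R ->
  ((x %% d)%N)%:R < eps * d%:R \/
  ((1 - eps) * d%:R < ((x %% d)%N)%:R /\ ((x %% d)%N)%:R < (d%:R : R)).
Proof.
move=> d0 e0 e2 h1 h2.
have dR : 0 < d%:R :> R by rewrite ltr0n.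
have ed : eps * d%:R <= 2^-1 * d%:R by apply: ler_wpM2r => //; exact: ltW.
case: (leqP (q * d) x) => hx.
- left.
  have hlt : (x - q * d < d)%N.
    by rewrite -(ltr_nat R) natrB //; lra.
  have em : (x %% d = x - q * d)%N.
    by rewrite -{1}(subnKC hx) modnMDl modn_small.
  rewrite em natrB //; lra.
- right.
  have hq : (0 < q)%N by case: q hx {h1 h2} => //=; rewrite mul0n.
  set QD := (q * d)%N in hx h1 h2.
  have hy : (QD - x < d)%N by rewrite -(ltr_nat R) natrB; [lra | exact: ltnW].
  have e1 : (q.-1 * d = QD - d)%N by rewrite -subn1 mulnBl mul1n.
  have hQ : (d <= QD)%N by rewrite /QD leq_pmull.
  have ex : x = (q.-1 * d + (d - (QD - x)))%N by rewrite e1; lia.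
  have em : (x %% d = d - (QD - x))%N.
    by rewrite {1}ex modnMDl modn_small //; lia.
  rewrite em !natrB; [|lia|exact: ltnW].
  have hxR : x%:R < QD%:R :> R by rewrite ltr_nat.
  split; lra.
Qed.

Lemma range_real (R : realType) (K t nk m M d eps : R) :
  0 < eps -> eps <= 2^-1 -> t = eps * K -> 1 < t -> 0 < K -> 1 <= m -> m <= M -> 0 <= d ->
  nk - m / 2 < m * d -> m * d <= nk + m / 2 -> K * M ^+ 2 <= nk ->
  nk < d * (M + eps) /\ d * (1 - eps) < nk.
Proof.
move=> e0 e2 te t1 K0 m1 mM d0 hD1 hD2 hM.
have M0 : 0 < M by lra.
have Md : m * d <= M * d by apply: ler_wpM2r.
have MM : M <= M ^+ 2 by rewrite expr2 -{1}[M]mul1r; apply: ler_wpM2r; lra.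
have KM : M ^+ 2 <= K * M ^+ 2.
  have : 0 <= (K - 1) * M ^+ 2 by rewrite mulr_ge0 ?sqr_ge0 //; nra.
  rewrite mulrBl mul1r; lra.
split.
- have h : M * (K * M - 1/2) < M * d.
    have -> : M * (K * M - 1/2) = K * M ^+ 2 - M / 2 by rewrite expr2; field.
    have : nk - M / 2 <= nk - m / 2 by lra.
    lra.
  rewrite ltr_pM2l // in h.
  have h2 : eps * (K * M - 1/2) <= eps * d by apply: ler_wpM2l; lra.
  have e3 : eps * (K * M - 1/2) = t * M - eps / 2 by rewrite te; field.
  have h3 : M <= t * M by rewrite -{1}[M]mul1r; apply: ler_wpM2r; lra.
  have e4 : d * (M + eps) = M * d + eps * d by ring.
  lra.
- have nk0 : 0 < nk by lra.
  have hd : d <= nk + 1/2.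
    case: (lerP d (1/2)) => hd; first lra.
    have : 1 * (d - 1/2) <= m * (d - 1/2) by apply: ler_wpM2r; lra.
    have e5 : m * (d - 1/2) = m * d - m / 2 by field.
    lra.
  have h1 : d * (1 - eps) <= (nk + 1/2) * (1 - eps) by apply: ler_wpM2r; lra.
  have h2 : 1 <= eps * nk.
    have : eps * (K * M ^+ 2) <= eps * nk by apply: ler_wpM2l; lra.
    have : M ^+ 2 <= t * M ^+ 2 by rewrite -{1}[M ^+ 2]mul1r; apply: ler_wpM2r; lra.
    have e6 : eps * (K * M ^+ 2) = t * M ^+ 2 by rewrite te; ring.
    lra.
  have e7 : (nk + 1/2) * (1 - eps) = nk + 1/2 - eps * nk - eps / 2 by field.
  lra.
Qed.

Lemma auxl (R : realType) (a b c : R) : - a < b - c -> c - a < b.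
Proof. move=> h; lra. Qed.
Lemma auxr (R : realType) (a b c : R) : b - c < a -> b < c + a.
Proof. move=> h; lra. Qed.

Lemma mono_le (k : nat) (n : nat -> nat) :
  (forall i : nat, (1 <= i < k)%N -> (n i < n i.+1)%N) ->
  forall j, (1 <= j <= k)%N -> (n j <= n k)%N.
Proof.
move=> hinc j /andP [j1 jk].
have gen : forall i, (j + i <= k)%N -> (n j <= n (j + i))%N.
  elim=> [|i IH] h; first by rewrite addn0.
  have h' : (j + i <= k)%N by lia.
  have := hinc (j + i); rewrite addnS.
  have -> : (1 <= j + i < k)%N by lia.
  move=> /(_ isT) h2; exact: leq_trans (IH h') (ltnW h2).
by have := gen (k - j)%N; rewrite subnKC //; apply.
Qed.

Theorem lemma3 (R : realType) (k N : nat) (eps : R) (n : nat -> nat) :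
  (0 < k)%N -> (0 < N)%N ->
  0 < eps -> eps <= 2^-1 ->
  (forall i : nat, (1 <= i < k)%N -> (n i < n i.+1)%N) ->
  (n k <= N)%N ->
  Vk eps k <= ((n k)%:R : R) ->
  exists d : nat,
    (n k)%:R / (((kappa eps)%:~R : R) ^+ (k - 1)%N + eps) < d%:R /\
    d%:R < (n k)%:R / (1 - eps) /\
    (forall j : nat, (1 <= j <= k)%N ->
       (((n j %% d)%N)%:R < eps * d%:R \/
        ((1 - eps) * d%:R < ((n j %% d)%N)%:R /\ ((n j %% d)%N)%:R < (d%:R : R)))).
Proof.
move=> k0 N0 e0 e2 hinc hN hV.
have hle := @mono_le k n hinc.
have fl0 : 0 <= Num.floor (eps^-1) by rewrite floor_ge0 invr_ge0 ltW.
have [K hK] : exists K : nat, kappa eps = K%:Z.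
  exists `|kappa eps|%N; rewrite gez0_abs // /kappa addr_ge0 //.
have KR : ((kappa eps)%:~R : R) = K%:R by rewrite hK.
have kgt : eps^-1 < K%:R by rewrite -KR /kappa; exact: floorD1_gt.
have kle : (K%:R : R) <= eps^-1 + 1.
  rewrite -KR /kappa intrD; have := floor_le (eps^-1); have h1 : ((1:int)%:~R : R) = 1 by []. rewrite h1; lra.
have en0 : eps != 0 by rewrite gt_eqF.
have eei : eps * eps^-1 = 1 by rewrite mulfV.
set t := eps * K%:R.
have t1 : 1 < t by rewrite -eei /t ltr_pM2l.
have t2 : t <= 1 + eps.
  have : t <= eps * (eps^-1 + 1) by rewrite /t ler_wpM2l // ltW.
  rewrite mulrDr eei mulr1; lra.
have ei0 : 0 < eps^-1 by rewrite invr_gt0.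
have K0r : 0 < (K%:R : R) by lra.
have K0 : (0 < K)%N by rewrite -(ltr0n R).
move: hV; rewrite /Vk KR ge_max => /andP [hA hB].
set M := (K ^ (k - 1))%N.
have MR : (K%:R : R) ^+ (k - 1) = M%:R by rewrite natrX.
have ee : (2 * k - 2)%N = ((k - 1) * 2)%N by rewrite mulnBl mul1n mulnC.
rewrite ee exprM MR in hA.
have Kne : (K%:R : R) != 0 by rewrite gt_eqF.
have hd : 0 < eps - (K%:R)^-1.
  have -> : eps - (K%:R)^-1 = (t - 1) / K%:R by rewrite /t; field.
  by rewrite divr_gt0 // subr_gt0.
rewrite ler_pdivrMr // in hA.
set nk := n k in hA hB *.
have M1 : (0 < M)%N by rewrite expn_gt0 K0.
have M1r : 1 <= (M%:R : R) by rewrite ler1n.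
have hM : K%:R * (M%:R : R) ^+ 2 / 2 <= (t - 1) * nk%:R.
  have := ler_wpM2l (ltW K0r) hA.
  have -> : K%:R * (nk%:R * (eps - (K%:R)^-1)) = (t - 1) * nk%:R :> R by rewrite /t; field.
  by rewrite mulrA.
have nkR : 0 < (nk%:R : R).
  have : 0 < K%:R * (M%:R : R) ^+ 2 / 2.
    by rewrite divr_gt0 // mulr_gt0 // exprn_gt0 //; lra.
  move=> h; have : 0 < (t - 1) * nk%:R by lra.
  by rewrite pmulr_rgt0 // subr_gt0.
have nk0 : (0 < nk)%N by rewrite -(ltr0n R).
have nkpos : K%:R * (M%:R : R) ^+ 2 <= nk%:R.
  have : (t - 1) * nk%:R <= 2^-1 * nk%:R by apply: ler_wpM2r; lra.
  move: hM; set Y := K%:R * _; lra.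
have [m [hm hj]] := @pigeon k K n K0 nk0 hle.
rewrite -/M in hm.
have m1r : 1 <= (m%:R : R) by rewrite ler1n; case/andP: hm.
have mMr : (m%:R : R) <= M%:R by rewrite ler_nat; case/andP: hm.
set d := ((2 * nk + m) %/ (2 * m))%N.
have m2 : (0 < 2 * m)%N by rewrite muln_gt0; case/andP: hm.
have dd1 : (d * (2 * m) <= 2 * nk + m)%N by exact: leq_trunc_div.
have dd2 : (2 * nk + m < d.+1 * (2 * m))%N by exact: ltn_ceil.
have Dd1 : (m%:R : R) * d%:R <= nk%:R + m%:R / 2.
  move: dd1; rewrite -(ler_nat R) !natrM natrD natrM; lra.
have Dd2 : (nk%:R : R) - m%:R / 2 < m%:R * d%:R.
  move: dd2; rewrite mulSn -(ltr_nat R) !natrD !natrM; lra.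
have [r1 r2] := @range_real R _ _ _ _ _ _ _ e0 e2 (erefl t) t1 K0r m1r mMr (ler0n R d) Dd2 Dd1 nkpos.
have d0 : (0 < d)%N.
  rewrite lt0n; apply/eqP => dz; move: r1; rewrite dz mul0r; lra.
have dR : 0 < (d%:R : R) by rewrite ltr0n.
exists d; split.
  by rewrite ?KR MR ltr_pdivrMr //; lra.
split.
  by rewrite ltr_pdivlMr //; lra.
move=> j hjj.
have [q [qm [c1 c2]]] := hj j hjj.
have xn : ((n j)%:R : R) <= nk%:R by rewrite ler_nat; exact: hle.
have qc : (q%:R : R) = m%:R \/ (q%:R : R) <= m%:R - 1.
  case: (eqVneq q m) => [->|qne]; first by left.
  right; have : (q.+1 <= m)%N by rewrite ltn_neqAle qne qm.
  by rewrite -(ler_nat R) -addn1 natrD; lra.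
have hr1 : K%:R * ((n j)%:R * m%:R - q%:R * nk%:R) < (nk%:R : R).
  move: c1; rewrite -(ltr_nat R) !natrM natrD !natrM; lra.
have hr2 : - (nk%:R : R) < K%:R * ((n j)%:R * m%:R - q%:R * nk%:R).
  move: c2; rewrite -(ltr_nat R) !natrM natrD !natrM; lra.
have qmr : (q%:R : R) <= m%:R by rewrite ler_nat.
have [g1 g2] := @core_real R _ _ _ _ _ _ _ _ _ e0 e2 (erefl t) t1 t2 K0r m1r mMr (ler0n R q)
   qmr qc xn (ler0n R _) hr1 hr2 hM Dd2 Dd1.
have Km : 0 < (K%:R : R) * m%:R by rewrite mulr_gt0 //; lra.
have ea : K%:R * ((n j)%:R * m%:R - q%:R * (m%:R * d%:R)) =
   (K%:R * m%:R) * ((n j)%:R - q%:R * d%:R) :> R by ring.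
have eb : t * (m%:R * d%:R) = (K%:R * m%:R) * (eps * d%:R) by rewrite /t; ring.
rewrite ea eb in g1 g2.
rewrite ltr_pM2l // in g2.
rewrite -mulrN ltr_pM2l // in g1.
have g3 : (q * d)%:R - eps * d%:R < (n j)%:R :> R by rewrite natrM; exact: auxl g1.
have g4 : (n j)%:R < (q * d)%:R + eps * d%:R :> R by rewrite natrM; exact: auxr g2.
exact: (@mod_close R eps (n j) q d d0 e0 e2 g3 g4).
Qed.
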